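(* For integers $i\ge0$, $s\ge1$ and $n>s$, let $b_{i,s}(n)$ be the coefficient of $t^i$ in the power series expansion of $\frac{f_n(t)}{f_s(t)f_{n-s}(t)}$. Then for fixed $i\ge 0$ and $s\ge 1$, the function $n\mapsto b_{i,s}(n)$ is constant for $n\ge\max(i,1)+s$.
   Context: $f_n(t):=(1-t^2)(1-t^3)\cdots(1-t^n)$ for $n\ge1$ (so $f_1=1$). *)

(* Defs.v *)
From mathcomp Require Import all_boot all_order all_algebra.
Set Implicit Arguments. Unset Strict Implicit. Unset Printing Implicit Defensive.
Import GRing.Theory Num.Theory.
Local Open Scope ring_scope.

Definition fpoly (n : nat) : {poly int} :=
  \prod_(2 <= k < n.+1) (1 - 'X^k).

(* Coefficients e_0, ..., e_m of the formal power series inverse 1/d, for a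
   polynomial d with constant term d_0 = 1 (a unit of int[[t]]):
   e_0 = 1, e_m = - sum_{j=1}^m d_j e_{m-j}. *)
Fixpoint ps_inv_seq (d : {poly int}) (m : nat) : seq int :=
  match m with
  | 0 => [:: 1]
  | m'.+1 =>
      let s := ps_inv_seq d m' in
      rcons s (- \sum_(1 <= j < m'.+2) d`_j * nth 0 s (m'.+1 - j))
  end.

Definition ps_inv_coef (d : {poly int}) (m : nat) : int :=
  nth 0 (ps_inv_seq d m) m.

Definition ps_div_coef (p d : {poly int}) (i : nat) : int :=
  \sum_(0 <= j < i.+1) p`_j * ps_inv_coef d (i - j).

Definition b (i s n : nat) : int :=
  ps_div_coef (fpoly n) (fpoly s * fpoly (n - s)) i.

(* Main.v *)
Require Import Defs.
From mathcomp Require Import all_boot all_order all_algebra.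
From mathcomp Require Import zify.
Set Implicit Arguments. Unset Strict Implicit. Unset Printing Implicit Defensive.
Import GRing.Theory Num.Theory.
Local Open Scope ring_scope.

Definition eqi (i : nat) (p q : {poly int}) := forall k, (k <= i)%N -> p`_k = q`_k.

Lemma eqi_refl i p : eqi i p p. Proof. by []. Qed.
Lemma eqi_sym i p q : eqi i p q -> eqi i q p. Proof. by move=> h k hk; rewrite h. Qed.
Lemma eqi_trans i p q r : eqi i p q -> eqi i q r -> eqi i p r.
Proof. by move=> h1 h2 k hk; rewrite h1 // h2. Qed.

Lemma eqiM i p p' q q' : eqi i p p' -> eqi i q q' -> eqi i (p * q) (p' * q').
Proof.
move=> hp hq k hk; rewrite !coefM; apply: eq_bigr => j _.
have hj : (j <= k)%N by rewrite -ltnS.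
rewrite hp ?(leq_trans hj) // hq //; apply: leq_trans hk; exact: leq_subr.
Qed.

Lemma size_inv_seq (d : {poly int}) m : size (ps_inv_seq d m) = m.+1.
Proof. by elim: m => [|m IH] //=; rewrite size_rcons IH. Qed.

Lemma nth_inv_seq (d : {poly int}) m k : (k <= m)%N -> nth 0 (ps_inv_seq d m) k = ps_inv_coef d k.
Proof.
elim: m => [|m IH]; first by rewrite leqn0 => /eqP ->.
rewrite leq_eqVlt => /orP [/eqP -> //| hk].
rewrite /= nth_rcons size_inv_seq hk; exact: IH.
Qed.

Lemma inv_rec (d : {poly int}) m : ps_inv_coef d m.+1 =
  - \sum_(j < m.+1) d`_j.+1 * ps_inv_coef d (m - j).
Proof.
rewrite /ps_inv_coef /= nth_rcons size_inv_seq ltnn eqxx.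
rewrite big_add1 /= big_mkord; congr (- _); apply: eq_bigr => j _.
rewrite subSS nth_inv_seq //; exact: leq_subr.
Qed.

Definition einv (i : nat) (d : {poly int}) : {poly int} := \poly_(j < i.+1) ps_inv_coef d j.

Lemma einvP i (d : {poly int}) : d`_0 = 1 -> eqi i (d * einv i d) 1.
Proof.
move=> d0 k hk; rewrite coefM coef1.
have E : forall j : 'I_k.+1, d`_j * (einv i d)`_(k - j) = d`_j * ps_inv_coef d (k - j).
  move=> j; rewrite coef_poly ltnS (leq_trans (leq_subr _ _) hk) //.
rewrite (eq_bigr _ (fun j _ => E j)).
case: k hk {E} => [|m] hk.
  by rewrite big_ord1 d0 mul1r /ps_inv_coef.
rewrite big_ord_recl /= d0 mul1r subn0 inv_rec.
have -> : \sum_(j < m.+1) d`_(bump 0 j) * ps_inv_coef d (m.+1 - bump 0 j)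
        = \sum_(j < m.+1) d`_j.+1 * ps_inv_coef d (m - j).
  by apply: eq_bigr => j _; rewrite /bump /= add1n subSS.
by rewrite addNr.
Qed.

Lemma divP i (p d : {poly int}) k : (k <= i)%N -> ps_div_coef p d k = (p * einv i d)`_k.
Proof.
move=> hk; rewrite /ps_div_coef coefM big_mkord; apply: eq_bigr => j _.
rewrite coef_poly ltnS (leq_trans (leq_subr _ _) hk) //.
Qed.

Lemma fpoly0 n : (fpoly n)`_0 = 1.
Proof.
rewrite -horner_coef0 /fpoly horner_prod big_nat; apply: big1 => k /andP [hk _].
rewrite !hornerE expr0n /=.
by case: k hk => // k _; rewrite subr0.
Qed.

Lemma fpoly_split n s : (s < n)%N ->
  fpoly n = fpoly (n - s) * \prod_((n - s).+1 <= k < n.+1) (1 - 'X^k).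
Proof.
move=> hsn; rewrite /fpoly -big_cat_nat //.
  by rewrite ltnS subn_gt0.
by rewrite ltnS leq_subr.
Qed.

Lemma Q1 i a c : (i < a)%N -> eqi i (\prod_(a <= k < c) (1 - 'X^k)) 1.
Proof.
move=> ha; rewrite big_nat; apply: (big_ind (fun q => eqi i q 1)) => //.
  by move=> x y hx hy; rewrite -(mulr1 1); apply: eqiM.
move=> k /andP [hak _] j hj; rewrite coefB coefXn coef1.
have -> : (j == k) = false.
  by apply/negbTE; rewrite neq_ltn (leq_ltn_trans hj (leq_trans ha hak)).
by rewrite subr0.
Qed.

Lemma bconst i s n : (1 <= s)%N -> (maxn i 1 + s <= n)%N ->
  b i s n = ps_inv_coef (fpoly s) i.
Proof.
move=> hs hn.
have hsn : (s < n)%N.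
  by move: hn; rewrite /maxn; case: ifP; lia.
have hi : (i < (n - s).+1)%N.
  by move: hn; rewrite /maxn; case: ifP; lia.
set F := fpoly (n - s); pose Q : {poly int} := \prod_((n - s).+1 <= k < n.+1) (1 - 'X^k).
set D := fpoly s * F.
have D0 : D`_0 = 1 by rewrite coef0M fpoly0 /F fpoly0 mulr1.
rewrite /b (divP _ _ (leqnn i)) -/F -/D.
set X := fpoly n * einv i D; set Y := einv i (fpoly s).
have -> : ps_inv_coef (fpoly s) i = Y`_i by rewrite coef_poly ltnSn.
have HP : fpoly n = F * Q by rewrite /F /Q (fpoly_split hsn).
have h1 : eqi i (D * X) (fpoly n).
  rewrite /X mulrCA -{2}(mulr1 (fpoly n)); apply: eqiM => //; exact: einvP.
have h2 : eqi i (D * Y) (fpoly n).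
  rewrite /D -mulrA mulrCA HP; apply: eqiM => //.
  apply: (@eqi_trans _ _ 1); first by rewrite /Y; apply: einvP; rewrite fpoly0.
  by apply: eqi_sym; apply: Q1.
have hE : eqi i (einv i D * D) 1 by rewrite mulrC; exact: einvP.
have hX : eqi i X (einv i D * fpoly n).
  apply: (@eqi_trans _ _ (einv i D * D * X)).
    by rewrite -{1}(mul1r X); apply: eqiM => //; exact: eqi_sym.
  by rewrite -mulrA; apply: eqiM.
have hY : eqi i Y (einv i D * fpoly n).
  apply: (@eqi_trans _ _ (einv i D * D * Y)).
    by rewrite -{1}(mul1r Y); apply: eqiM => //; exact: eqi_sym.
  by rewrite -mulrA; apply: eqiM.
by rewrite hX // hY.
Qed.

Theorem lemma5p1 (i s : nat) (hs : (1 <= s)%N) :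
  forall n m : nat, (maxn i 1 + s <= n)%N -> (maxn i 1 + s <= m)%N ->
    b i s n = b i s m.
Proof.
by move=> n m hn hm; rewrite !bconst.
Qed.
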